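(* Let $G$ be a graph with adjacency matrix $A$ and positive degrees $d=A\mathbf 1$, let $e=(i,j)$, $i\ne j$, $a_{ij}>0$, be any edge, $v=e_i-e_j$, and $r>0$. Let \[ S_r=(1+r)D-A+\frac{1}{\|d\|_1}dd^T . \] Then $S_r$ is symmetric positive definite, and with $x=S_r^{-1}v$, $\alpha=a_{ij}(x_i-x_j)$, $\beta=a_{ij}x^TDx$, one has $\alpha<1$ and \[ c_r(e)=\frac{\beta}{1-\alpha}. \]
   Context: Graphs are undirected and possibly weighted on vertex set $\{1,\dots,n\}$, with symmetric nonnegative adjacency matrix $A=(a_{k\ell})$; $D=\mathrm{diag}(d)$, $\|d\|_1=\sum_kd_k$, $D^{\pm1/2}=\mathrm{diag}(d_k^{\pm1/2})$; $e_k$ is the $k$-th column of the identity and $\mathbf 1$ the all-ones vector. With $\widehat A=A+a_{ij}vv^T$ (deleting edge $e$ and adding loops of weight $a_{ij}$ at $i$ and $j$; $\widehat A\mathbf 1=d$). For $r>0$ and symmetric nonnegative $B$ with $B\mathbf 1=d$, $K_r(B)=\operatorname{Tr}\Big(\big((1+r)I-D^{-1/2}BD^{-1/2}+\tfrac{1}{\|d\|_1}D^{1/2}\mathbf 1\mathbf 1^TD^{1/2}\big)^{-1}\Big)-(1+r)^{-1}$; the regularized score is $c_r(e)=K_r(\widehat A)-K_r(A)$. *)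

(* Defs.v *)
From HB Require Import structures.
From mathcomp Require Import all_boot all_order all_algebra.
Set Implicit Arguments. Unset Strict Implicit. Unset Printing Implicit Defensive.
Import Order.TTheory GRing.Theory Num.Theory.
Local Open Scope ring_scope.

Section Defs.
Variables (R : rcfType) (n : nat).

Definition ones : 'cV[R]_n := const_mx 1.

Definition degv (A : 'M[R]_n) : 'cV[R]_n := A *m ones.

Definition Dmat (d : 'cV[R]_n) : 'M[R]_n := diag_mx d^T.
Definition Dsqrt (d : 'cV[R]_n) : 'M[R]_n := diag_mx (\row_k Num.sqrt (d k 0)).
Definition Dinvsqrt (d : 'cV[R]_n) : 'M[R]_n :=
  diag_mx (\row_k (Num.sqrt (d k 0))^-1).

Definition norm1 (d : 'cV[R]_n) : R := \sum_k d k 0.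

Definition evec (k : 'I_n) : 'cV[R]_n := delta_mx k 0.

Definition vvec (i j : 'I_n) : 'cV[R]_n := evec i - evec j.

Definition Ahat (A : 'M[R]_n) (i j : 'I_n) : 'M[R]_n :=
  A + A i j *: (vvec i j *m (vvec i j)^T).

(* K_r(B), where D, d are those of the graph *)
Definition Kr (d : 'cV[R]_n) (r : R) (B : 'M[R]_n) : R :=
  \tr (invmx ((1 + r)%:M - Dinvsqrt d *m B *m Dinvsqrt d
              + (norm1 d)^-1 *: (Dsqrt d *m ones *m ones^T *m Dsqrt d)))
  - (1 + r)^-1.

Definition cr (r : R) (A : 'M[R]_n) (i j : 'I_n) : R :=
  Kr (degv A) r (Ahat A i j) - Kr (degv A) r A.

Definition Smat (r : R) (A : 'M[R]_n) : 'M[R]_n :=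
  (1 + r) *: Dmat (degv A) - A + (norm1 (degv A))^-1 *: (degv A *m (degv A)^T).

Definition sym_posdef (S : 'M[R]_n) : Prop :=
  S^T = S /\ forall z : 'cV[R]_n, z != 0 -> 0 < (z^T *m S *m z) 0 0.

End Defs.
Arguments evec R {n} k.
Arguments vvec R {n} i j.

(* Main.v *)
Require Import Defs.
From HB Require Import structures.
From mathcomp Require Import all_boot all_order all_algebra.
From mathcomp Require Import ring lra.
Set Implicit Arguments. Unset Strict Implicit. Unset Printing Implicit Defensive.
Import Order.TTheory GRing.Theory Num.Theory.
Local Open Scope ring_scope.

Section Aux.
Variables (R : rcfType) (n : nat).
Implicit Types (M N : 'M[R]_n) (z : 'cV[R]_n).

Definition qf M z : R := (z^T *m M *m z) 0 0.

Lemma qfE M z : qf M z = \sum_k \sum_l z k 0 * M k l * z l 0.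
Proof.
rewrite /qf mxE; under eq_bigr do rewrite mxE mulr_suml.
rewrite exchange_big; apply: eq_bigr => k _; apply: eq_bigr => l _.
by rewrite mxE.
Qed.

Lemma qfD M N z : qf (M + N) z = qf M z + qf N z.
Proof.
rewrite !qfE -big_split; apply: eq_bigr => k _; rewrite -big_split.
apply: eq_bigr => l _; rewrite !mxE /=; ring.
Qed.

Lemma qfN M z : qf (- M) z = - qf M z.
Proof.
rewrite !qfE -sumrN; apply: eq_bigr => k _; rewrite -sumrN.
apply: eq_bigr => l _; rewrite !mxE /=; ring.
Qed.

Lemma qfZ c M z : qf (c *: M) z = c * qf M z.
Proof.
rewrite !qfE mulr_sumr; apply: eq_bigr => k _; rewrite mulr_sumr.
apply: eq_bigr => l _; rewrite !mxE /=; ring.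
Qed.

Lemma qf_diag (d : 'cV[R]_n) z : qf (Dmat d) z = \sum_k d k 0 * z k 0 ^+ 2.
Proof.
rewrite qfE; apply: eq_bigr => k _; rewrite (bigD1 k) //= big1 ?addr0.
  by rewrite /Dmat !mxE eqxx mulr1n; ring.
by move=> l /negPf lk; rewrite /Dmat !mxE eq_sym lk mulr0n mulr0 mul0r.
Qed.

Lemma qf_outer (d : 'cV[R]_n) z :
  qf (d *m d^T) z = (\sum_k z k 0 * d k 0) ^+ 2.
Proof.
rewrite qfE expr2 mulr_suml; apply: eq_bigr => k _; rewrite mulr_sumr.
apply: eq_bigr => l _; rewrite !mxE big_ord1 !mxE; ring.
Qed.

Lemma qf_lap (d : 'cV[R]_n) (B : 'M[R]_n) z :
  B^T = B -> (forall k l, 0 <= B k l) -> B *m ones R n = d ->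
  qf B z <= qf (Dmat d) z.
Proof.
move=> Bs Bp Bd.
have dE k : d k 0 = \sum_l B k l.
  by rewrite -Bd mxE; apply: eq_bigr => l _; rewrite mxE mulr1.
have key : 2 * (qf (Dmat d) z - qf B z) =
    \sum_k \sum_l B k l * (z k 0 - z l 0) ^+ 2.
  have h1 : \sum_k \sum_l B k l * z l 0 ^+ 2 = \sum_k \sum_l B k l * z k 0 ^+ 2.
    rewrite exchange_big; apply: eq_bigr => k _; apply: eq_bigr => l _.
    by rewrite -{1}Bs mxE.
  have h2 : \sum_k \sum_l B k l * (z k 0 - z l 0) ^+ 2 =
     \sum_k \sum_l B k l * z k 0 ^+ 2 + \sum_k \sum_l B k l * z l 0 ^+ 2
     - 2 * \sum_k \sum_l z k 0 * B k l * z l 0.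
    rewrite mulr_sumr -!big_split -sumrN -big_split; apply: eq_bigr => k _.
    rewrite mulr_sumr -!big_split -sumrN -big_split; apply: eq_bigr => l _ /=.
    rewrite /=; ring.
  rewrite h2 h1 qf_diag qfE.
  have h3 : \sum_k d k 0 * z k 0 ^+ 2 = \sum_k \sum_l B k l * z k 0 ^+ 2.
    by apply: eq_bigr => k _; rewrite dE mulr_suml.
  rewrite h3; ring.
have : 0 <= 2 * (qf (Dmat d) z - qf B z).
  rewrite key; apply: sumr_ge0 => k _; apply: sumr_ge0 => l _.
  by apply: mulr_ge0 => //; apply: sqr_ge0.
rewrite pmulr_rge0 // subr_ge0 //.
Qed.

Lemma invmx_uniq (M X : 'M[R]_n) : M *m X = 1%:M -> invmx M = X.
Proof.
move=> h; have [uM _] := mulmx1_unit h.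
by rewrite -[invmx M]mulmx1 -h mulmxA mulVmx // mul1mx.
Qed.

Lemma posdef_unit (S : 'M[R]_n) : sym_posdef S -> S \in unitmx.
Proof.
case=> Ss Sp; rewrite unitmxE unitfE; apply/negP => /det0P [w w0 wS].
have z0 : w^T != 0 by apply: contra w0 => /eqP h; rewrite -[w]trmxK h trmx0.
by have := Sp _ z0; rewrite trmxK wS mul0mx mxE ltxx.
Qed.

Lemma sum_delta (y : 'cV[R]_n) (i : 'I_n) :
  \sum_k y k 0 * (evec R i) k 0 = y i 0.
Proof.
rewrite (bigD1 i) //= big1 ?addr0; first by rewrite mxE !eqxx mulr1.
by move=> k /negPf ki; rewrite mxE ki mulr0.
Qed.

Lemma vTmul (i j : 'I_n) (y : 'cV[R]_n) :
  ((vvec R i j)^T *m y) 0 0 = y i 0 - y j 0.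
Proof.
rewrite mxE -(sum_delta y i) -(sum_delta y j) -sumrB.
by apply: eq_bigr => k _; rewrite !mxE /=; ring.
Qed.

Lemma qf_outer_v (i j : 'I_n) (y : 'cV[R]_n) :
  qf (vvec R i j *m (vvec R i j)^T) y = (y i 0 - y j 0) ^+ 2.
Proof.
rewrite qf_outer -(sum_delta y i) -(sum_delta y j) -sumrB; congr (_ ^+ 2).
by apply: eq_bigr => k _; rewrite !mxE /=; ring.
Qed.

Lemma trDmat (d : 'cV[R]_n) : (Dmat d)^T = Dmat d.
Proof. exact: tr_diag_mx. Qed.

Lemma trmx3 (a b : R) (M1 M2 M3 : 'M[R]_n) :
  (a *: M1 - M2 + b *: M3)^T = a *: M1^T - M2^T + b *: M3^T.
Proof. by apply/matrixP => k l; rewrite !mxE. Qed.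

Lemma trouter (d : 'cV[R]_n) : (d *m d^T)^T = d *m d^T.
Proof. by rewrite trmx_mul trmxK. Qed.

Lemma MB_gen (dv : 'cV[R]_n) (c Nn : R) (B : 'M[R]_n) :
  (forall k, 0 < dv k 0) ->
  c%:M - Dinvsqrt dv *m B *m Dinvsqrt dv
   + Nn *: (Dsqrt dv *m ones R n *m (ones R n)^T *m Dsqrt dv)
  = Dinvsqrt dv *m (c *: Dmat dv - B + Nn *: (dv *m dv^T)) *m Dinvsqrt dv.
Proof.
move=> dvp; apply/matrixP => k l; rewrite /Dinvsqrt /Dsqrt /Dmat.
rewrite !(mul_diag_mx, mul_mx_diag) !mxE !big_ord1 !mxE.
have pos x : 0 < dv x 0 -> Num.sqrt (dv x 0) != 0 /\ dv x 0 = Num.sqrt (dv x 0) ^+ 2.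
  by move=> h; rewrite sqrtr_eq0 -ltNge h sqr_sqrtr // ltW.
have [sk ek] := pos k (dvp k); have [sl el] := pos l (dvp l).
case: (eqVneq k l) => [kl|kl].
  subst l; rewrite !mulr1n; move: sk ek.
  set a := Num.sqrt (dv k 0) => sk ek.
  change (dv k ord0) with (dv k 0); rewrite ek; field; done.
rewrite !mulr0n mulr0; move: sk ek sl el.
set a := Num.sqrt (dv k 0); set b := Num.sqrt (dv l 0) => sk ek sl el.
change (dv k ord0) with (dv k 0); change (dv l ord0) with (dv l 0).
rewrite ek el. clearbody a b. field; by rewrite sk sl.
Qed.

Lemma DinvDsq (dv : 'cV[R]_n) : (forall k, 0 < dv k 0) ->
  Dinvsqrt dv *m Dsqrt dv = 1%:M.
Proof.
move=> dvp; apply/matrixP => k l; rewrite /Dinvsqrt /Dsqrt mul_diag_mx !mxE.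
case: (eqVneq k l) => [kl|kl]; last by rewrite !mulr0n mulr0.
subst l; rewrite !mulr1n mulVf // sqrtr_eq0 -ltNge; exact: dvp.
Qed.

Lemma DsqDsq (dv : 'cV[R]_n) : (forall k, 0 < dv k 0) ->
  Dsqrt dv *m Dsqrt dv = Dmat dv.
Proof.
move=> dvp; apply/matrixP => k l; rewrite /Dmat /Dsqrt mul_diag_mx !mxE.
case: (eqVneq k l) => [kl|kl]; last by rewrite !mulr0n mulr0.
by subst l; rewrite !mulr1n -expr2 sqr_sqrtr // ltW.
Qed.

Lemma SM (S : 'M[R]_n) (w : 'cV[R]_n) (a : R) :
  S^T = S -> S \in unitmx ->
  1 - a * (w^T *m (invmx S *m w)) 0 0 != 0 ->
  invmx (S - a *: (w *m w^T)) = invmx S +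
    (a / (1 - a * (w^T *m (invmx S *m w)) 0 0)) *:
      ((invmx S *m w) *m (invmx S *m w)^T).
Proof.
move=> Ss uS; set y := invmx S *m w; set t := (w^T *m y) 0 0 => h.
apply: invmx_uniq.
have wTinv : w^T *m invmx S = y^T by rewrite /y trmx_mul trmx_inv Ss.
have Sy : S *m y = w by rewrite /y mulKVmx.
have wty : w^T *m y = t%:M by rewrite [LHS]mx11_scalar.
have S'y : (S - a *: (w *m w^T)) *m y = (1 - a * t) *: w.
  rewrite mulmxBl Sy -scalemxAl -mulmxA wty mul_mx_scalar scalerA.
  by rewrite scalerBl scale1r.
rewrite mulmxDr -scalemxAr mulmxA S'y -scalemxAl scalerA.
rewrite mulmxBl mulmxV // -scalemxAl -mulmxA wTinv.
have -> : a / (1 - a * t) * (1 - a * t) = a by field.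
by rewrite subrK.
Qed.

End Aux.

Section Main.
Variables (R : rcfType) (n : nat) (A : 'M[R]_n) (i j : 'I_n) (r : R).
Hypotheses (As : A^T = A) (Ap : forall k l, 0 <= A k l)
  (dp : forall k, 0 < degv A k 0) (ij : i != j) (ap : 0 < A i j) (rp : 0 < r).
Local Notation d := (degv A).
Local Notation D := (Dmat d).
Local Notation N := (norm1 d).
Local Notation v := (vvec R i j).

Definition SB (B : 'M[R]_n) := (1 + r) *: D - B + N^-1 *: (d *m d^T).

Lemma N_gt0 : 0 < N.
Proof.
rewrite /norm1 (bigD1 i) //=; apply: ltr_wpDr; last exact: dp.
by apply: sumr_ge0 => k _; apply: ltW.
Qed.

Lemma qfD_pos z : z != 0 -> 0 < qf D z.
Proof.
move=> z0; case: (boolP [exists k, z k 0 != 0]) => [/existsP [k hk] | /existsPn h].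
  rewrite qf_diag (bigD1 k) //=; apply: ltr_wpDr.
    by apply: sumr_ge0 => l _; apply: mulr_ge0; [exact: ltW | exact: sqr_ge0].
  by apply: mulr_gt0 => //; rewrite exprn_even_gt0 // hk orbT.
case/negP: z0; apply/eqP/matrixP => k l; rewrite (ord1 l) mxE.
by move: (h k); rewrite negbK => /eqP.
Qed.

Lemma SB_pos B : B^T = B -> (forall k l, 0 <= B k l) -> B *m ones R n = d ->
  sym_posdef (SB B).
Proof.
move=> Bs Bp Bd; split.
  by rewrite /SB trmx3 trDmat trouter Bs.
move=> z z0; rewrite -/(qf _ z) /SB qfD qfD qfN !qfZ qf_outer.
have h1 := qfD_pos z0; have h2 := qf_lap z Bs Bp Bd.
have h3 : 0 < r * qf D z by apply: mulr_gt0.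
have h4 : 0 <= N^-1 * (\sum_k z k 0 * d k 0) ^+ 2.
  by apply: mulr_ge0; [rewrite invr_ge0 ltW // N_gt0 | exact: sqr_ge0].
lra.
Qed.

Lemma vTones : v^T *m ones R n = 0.
Proof. by apply/matrixP => p q; rewrite !ord1 vTmul !mxE subrr. Qed.

Lemma Ahat_sym : (Ahat A i j)^T = Ahat A i j.
Proof.
rewrite /Ahat; have -> : forall (M1 M3 : 'M[R]_n) b, (M1 + b *: M3)^T = M1^T + b *: M3^T.
  by move=> M1 M3 b; apply/matrixP => k l; rewrite !mxE.
by rewrite trouter As.
Qed.

Lemma Ahat_deg : Ahat A i j *m ones R n = d.
Proof.
by rewrite /Ahat mulmxDl -scalemxAl -mulmxA vTones mulmx0 scaler0 addr0.
Qed.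

Lemma Ahat_nonneg k l : 0 <= Ahat A i j k l.
Proof.
rewrite /Ahat !mxE big_ord1 !mxE.
have h1 := Ap k l; have h2 := ap; have Aji : A j i = A i j by rewrite -{1}As mxE.
have ji : j != i by rewrite eq_sym.
case: (eqVneq k i) => [->|ki]; case: (eqVneq l j) => [->|lj];
  case: (eqVneq k j) => [kj|kj]; case: (eqVneq l i) => [li|li];
  rewrite ?eqxx ?(negPf ij) ?(negPf ji) ?(negPf ki) ?(negPf lj) ?(negPf kj) ?(negPf li) /=.
all: (try subst k); (try subst l); rewrite ?mulr1n ?mulr0n. all: try lra. all: first [have := Ap i i; lra | have := Ap j j; lra | have := Ap i l; lra | have := Ap k j; lra].
Qed.

Lemma SB_Ahat : SB (Ahat A i j) = SB A - A i j *: (v *m v^T).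
Proof. apply/matrixP => k l; rewrite /SB /Ahat !mxE /=; ring. Qed.


Lemma Kr_SB B : SB B \in unitmx ->
  Kr d r B = \tr (invmx (SB B) *m D) - (1 + r)^-1.
Proof.
move=> uS; rewrite /Kr (MB_gen (1 + r) N^-1 B dp) -/(SB B).
rewrite (invmx_uniq (X := Dsqrt d *m invmx (SB B) *m Dsqrt d)).
  rewrite mxtrace_mulC mulmxA (DsqDsq dp) mxtrace_mulC //.
rewrite !mulmxA -(mulmxA (Dinvsqrt d *m SB B)) (DinvDsq dp) mulmx1.
by rewrite -(mulmxA (Dinvsqrt d)) mulmxV // mulmx1 (DinvDsq dp).
Qed.

End Main.

Theorem mainTheorem12 (R : rcfType) (n : nat) (A : 'M[R]_n) (i j : 'I_n) (r : R) :
  A^T = A ->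
  (forall k l, 0 <= A k l) ->
  (forall k, 0 < degv A k 0) ->
  i != j -> 0 < A i j -> 0 < r ->
  let S := Smat r A in
  let x := invmx S *m (vvec R i j) in
  let alpha := A i j * (x i 0 - x j 0) in
  let beta := A i j * (x^T *m Dmat (degv A) *m x) 0 0 in
  sym_posdef S /\ alpha < 1 /\ cr r A i j = beta / (1 - alpha).
Proof.
move=> As Ap dp ij ap rp S x alpha beta.
have eS : S = SB A r A by [].
have SA : sym_posdef S by rewrite eS; apply: SB_pos.
have S'A : sym_posdef (SB A r (Ahat A i j)).
  by apply: SB_pos => //; [apply: Ahat_sym | apply: Ahat_nonneg | apply: Ahat_deg].
have uS := posdef_unit SA; have uS' := posdef_unit S'A.
have Sx : S *m x = vvec R i j by rewrite /x mulKVmx.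
have x0 : x != 0.
  apply/eqP => x0; move: Sx; rewrite x0 mulmx0 => /matrixP /(_ i 0).
  rewrite !mxE !eqxx (negPf ij) /= => /eqP; rewrite eq_sym subr0 oner_eq0.
  done.
set t := x i 0 - x j 0.
have qS : qf S x = t.
  rewrite /qf -mulmxA Sx /t -(vTmul i j x).
  have -> : x^T *m vvec R i j = ((vvec R i j)^T *m x)^T.
    by rewrite [RHS]trmx_mul trmxK.
  by rewrite mxE.
have qS' : qf (SB A r (Ahat A i j)) x = t - A i j * t ^+ 2.
  by rewrite SB_Ahat // qfD qfN qfZ qf_outer_v -eS qS.
have tpos : 0 < t by rewrite -qS; apply: SA.2.
have t'pos : 0 < t - A i j * t ^+ 2 by rewrite -qS'; apply: S'A.2.
have alt : alpha < 1 by rewrite /alpha -/t; nra.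
split => //; split => //.
have uSA : SB A r A \in unitmx by rewrite -eS.
rewrite /cr (Kr_SB dp uS') (Kr_SB dp uSA) SB_Ahat -eS.
have hne : 1 - A i j * ((vvec R i j)^T *m (invmx S *m vvec R i j)) 0 0 != 0.
  by rewrite -/x vTmul -/t; apply/eqP => h; move: alt; rewrite /alpha -/t; lra.
rewrite (SM SA.1 uS hne) -/x vTmul -/t.
have htr : \tr ((x *m x^T) *m Dmat (degv A)) = (x^T *m Dmat (degv A) *m x) 0 0.
  by rewrite -mulmxA mxtrace_mulC mulmxA trace_mx11.
rewrite mulmxDl mxtraceD -scalemxAl mxtraceZ htr /beta /alpha -/t.
have h1 : 1 - A i j * t != 0 by move: hne; rewrite -/x vTmul.
have h2 : 0 < 1 + r by lra.
field; by rewrite h1 (lt0r_neq0 h2).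
Qed.
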